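(* Let $G$ be a finite free graph with $n$ vertices. Then $\phi(G)\ge \frac{n}{\bar{\alpha}(G)}\ge \frac{n}{n-d(G)}$.
   Context: An independent set of $G$ is a free independent set if it is contained in at least two distinct maximal independent sets of $G$. $G$ is free if every vertex lies in some free independent set. The free chromatic number $\phi(G)$ is the minimum positive integer $t$ such that $V(G)$ can be partitioned into $t$ free independent sets. $\bar{\alpha}(G)$ denotes the maximum size of a free independent set of $G$. For an edge $e=uv$, $d(e)=|N(u)\cup N(v)|$ (the number of vertices lying in the neighborhood of $u$ or of $v$), and $d(G)=\min\{d(e): e\in E(G)\}$. *)

(* Defs.v *)
(* A finite simple graph: vertex type T : finType, adjacency
   e : rel T, assumed symmetric and irreflexive in the theorem. *)
From mathcomp Require Import all_boot all_order all_algebra.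
Set Implicit Arguments. Unset Strict Implicit. Unset Printing Implicit Defensive.

Section FreeColoring.
Variables (T : finType) (e : rel T).

Definition nbhd (u : T) : {set T} := [set w | e u w].

Definition independent (S : {set T}) : bool :=
  [forall x in S, forall y in S, ~~ e x y].

Definition maximal_independent (S : {set T}) : bool := maxset independent S.

Definition free_independent (S : {set T}) : bool :=
  independent S &&
  [exists I1 : {set T}, exists I2 : {set T},
     [&& maximal_independent I1, maximal_independent I2, I1 != I2,
         S \subset I1 & S \subset I2]].

Definition free_graph : Prop :=
  forall v : T, exists S : {set T}, free_independent S && (v \in S).

Definition free_partition (P : {set {set T}}) : bool :=
  partition P [set: T] && [forall S in P, free_independent S].

Definition free_chromatic_number : nat :=
  \big[minn/#|T|]_(P : {set {set T}} | free_partition P) #|P|.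

Definition alpha_bar : nat :=
  \max_(S : {set T} | free_independent S) #|S|.

Definition edge_d (u v : T) : nat := #|nbhd u :|: nbhd v|.

Definition graph_d : nat :=
  \big[minn/#|T|]_(u : T) \big[minn/#|T|]_(v : T | e u v) edge_d u v.

End FreeColoring.

(* Main.v *)
Require Import Defs.
From mathcomp Require Import all_boot all_order all_algebra.
From mathcomp Require Import zify.
Import GRing.Theory Num.Theory.
Local Open Scope ring_scope.

Lemma bigmin_seq_le (I : eqType) (r : seq I) (P : pred I) (F : I -> nat) x i :
  i \in r -> P i -> (\big[minn/x]_(j <- r | P j) F j <= F i)%N.
Proof.
elim: r => [//|a r IH]; rewrite in_cons big_cons => /orP [/eqP <-|ir] Pi.
  by rewrite Pi geq_minl.
case: (P a); last exact: IH.
by apply: leq_trans (geq_minr _ _) (IH ir Pi).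
Qed.

Lemma bigmin_le (I : finType) (P : pred I) (F : I -> nat) x i :
  P i -> (\big[minn/x]_(j | P j) F j <= F i)%N.
Proof. by move=> Pi; apply: bigmin_seq_le => //; rewrite mem_index_enum. Qed.

Section Aux.
Variables (T : finType) (e : rel T).
Hypotheses (e_sym : symmetric e) (e_irr : irreflexive e).

Lemma free_bound S : free_independent e S -> (#|S| <= #|T| - graph_d e)%N.
Proof.
case/andP=> indS /existsP [I1 /existsP [I2 /and5P [m1 m2 neq s1 s2]]].
have [i1 max1] := maxsetP m1.
have [i2 max2] := maxsetP m2.
have : ~~ (I1 \subset I2).
  apply/negP => sub; move/eqP: neq; apply; symmetry; exact: max1.
case/subsetPn => u uI1 uI2.
have /exists_inP [v vI2 euv] : [exists v in I2, e u v].
  apply: contraT => /exists_inPn H.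
  have indU : independent e (u |: I2).
    apply/forall_inP => x xU; apply/forall_inP => y yU.
    move: xU yU; rewrite !in_setU1 => /orP [/eqP ->|xI] /orP [/eqP ->|yI].
    - by rewrite e_irr.
    - exact: H.
    - by rewrite e_sym; exact: H.
    - by move/forall_inP: i2 => /(_ x xI) /forall_inP /(_ y yI).
  have := max2 _ indU (subsetUr _ _).
  by move=> E; move: uI2; rewrite -E setU11.
have dle : (graph_d e <= edge_d e u v)%N.
  rewrite /graph_d.
  apply: leq_trans (@bigmin_le _ predT _ _ u isT) _.
  exact: bigmin_le.
have SC : S \subset ~: (nbhd e u :|: nbhd e v).
  apply/subsetP => w wS; rewrite !inE negb_or.
  move/forall_inP: i1 => /(_ u uI1) /forall_inP /(_ w (subsetP s1 w wS)) ->.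
  move/forall_inP: i2 => /(_ v vI2) /forall_inP /(_ w (subsetP s2 w wS)) ->.
  done.
have := subset_leq_card SC.
have := cardsC (nbhd e u :|: nbhd e v).
rewrite /edge_d in dle.
lia.
Qed.

Lemma alpha_le : (alpha_bar e <= #|T| - graph_d e)%N.
Proof. by apply/bigmax_leqP => S; apply: free_bound. Qed.

Lemma alpha_pos : free_graph e -> (0 < #|T|)%N -> (0 < alpha_bar e)%N.
Proof.
move=> fg; case/card_gt0P => v _.
have [S /andP [fS vS]] := fg v.
apply: leq_trans (leq_bigmax_cond _ fS).
by apply/card_gt0P; exists v.
Qed.

Lemma chrom_bound : free_graph e -> (#|T| <= alpha_bar e * free_chromatic_number e)%N.
Proof.
move=> fg; rewrite /free_chromatic_number.
apply: (big_ind (fun x => #|T| <= alpha_bar e * x)%N).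
- case: (posnP #|T|) => [->//|n0].
  by rewrite leq_pmull // alpha_pos.
- by move=> x y Hx Hy; rewrite /minn; case: ifP.
- move=> P /andP [pP /forall_inP fP].
  rewrite -cardsT (card_partition pP) mulnC -sum_nat_const.
  apply: leq_sum => S SP; apply: leq_bigmax_cond; exact: fP.
Qed.

End Aux.

Theorem mainTheorem3 (T : finType) (e : rel T)
    (e_sym : symmetric e) (e_irr : irreflexive e) :
  free_graph e ->
  ((#|T|%:R / (alpha_bar e)%:R : rat) <= (free_chromatic_number e)%:R) /\
  ((#|T|%:R / (#|T| - graph_d e)%:R : rat) <= #|T|%:R / (alpha_bar e)%:R).
Proof.
move=> fg.
case: (posnP #|T|) => [->|n0]; first by rewrite !mul0r.
have a0 := @alpha_pos T e fg n0.
have ale := @alpha_le T e e_sym e_irr.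
have nd0 : (0 < #|T| - graph_d e)%N by apply: leq_trans ale.
split.
  rewrite ler_pdivrMr ?ltr0n // -natrM ler_nat mulnC.
  exact: (@chrom_bound T e).
apply: ler_wpM2l; first exact: ler0n.
rewrite lef_pV2 ?posrE ?ltr0n // ler_nat //.

Qed.
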